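(* For any $0\le t<1$ and $x\in\mathbb{R}$, $J^*(t,x)\ge g(t,x)$, where $$J^*(t,x)=\begin{cases}(1-t)^{n+1/2}(F_{2n+1}+G_{2n+1})(x/\sqrt{1-t})\,j(B^* ), & |x|<B^*\sqrt{1-t},\\ g(t,x), & |x|\ge B^*\sqrt{1-t}.\end{cases}$$
   Context: $n\ge0$ is an integer. $F_q(y):=\int_0^\infty u^{q-1}e^{yu-u^2/2}\,\mathrm{d}u$ and $G_q(y):=F_q(-y)$. $B^*>0$ is the unique zero of $B\mapsto(2n+1)-BF'_{2n+1}(B)/F_{2n+1}(B)$; it maximizes $B\mapsto B^{2n+1}/F_{2n+1}(B)$. $U(t,x)=(1-t)^{n+1/2}(B^* )^{2n+1}F_{2n+1}(x/\sqrt{1-t})/F_{2n+1}(B^* )$ if $x<B^*\sqrt{1-t}$, and $U(t,x)=x^{2n+1}$ otherwise. $g(t,x):=(U(t,x)-x^{2n+1})1_{\{x\le0\}}+(U(t,-x)+x^{2n+1})1_{\{x>0\}}$. $j(D):=\frac{1}{(F_{2n+1}+G_{2n+1})(D)}[D^{2n+1}+(B^* )^{2n+1}G_{2n+1}(D)/F_{2n+1}(B^* )]$ for $D\ge0$. *)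

(* Defs.v *)
From Stdlib Require Import Reals.
From Coquelicot Require Import Coquelicot.
Open Scope R_scope.

Definition F (q : nat) (y : R) : R :=
  RInt_gen (fun u => u ^ (q - 1) * exp (y * u - u ^ 2 / 2))
    (at_point 0) (Rbar_locally p_infty).

Definition G (q : nat) (y : R) : R := F q (- y).

Definition Bfun (n : nat) (B : R) : R :=
  INR (2 * n + 1) - B * Derive (F (2 * n + 1)) B / F (2 * n + 1) B.

Definition U (n : nat) (Bs t x : R) : R :=
  if Rlt_dec x (Bs * sqrt (1 - t)) then
    Rpower (1 - t) (INR n + 1 / 2) * Bs ^ (2 * n + 1)
      * F (2 * n + 1) (x / sqrt (1 - t)) / F (2 * n + 1) Bs
  else x ^ (2 * n + 1).

Definition g (n : nat) (Bs t x : R) : R :=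
  if Rle_dec x 0 then U n Bs t x - x ^ (2 * n + 1)
  else U n Bs t (- x) + x ^ (2 * n + 1).

Definition j (n : nat) (Bs D : R) : R :=
  / (F (2 * n + 1) D + G (2 * n + 1) D)
  * (D ^ (2 * n + 1) + Bs ^ (2 * n + 1) * G (2 * n + 1) D / F (2 * n + 1) Bs).

Definition Jstar (n : nat) (Bs t x : R) : R :=
  if Rlt_dec (Rabs x) (Bs * sqrt (1 - t)) then
    Rpower (1 - t) (INR n + 1 / 2)
      * (F (2 * n + 1) (x / sqrt (1 - t)) + G (2 * n + 1) (x / sqrt (1 - t)))
      * j n Bs Bs
  else g n Bs t x.

(* Main.v *)
Require Import Defs.
From Stdlib Require Import Reals Lra Lia Psatz Classical.
From Coquelicot Require Import Coquelicot.
Open Scope R_scope.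

Lemma exple x y : x <= y -> exp x <= exp y.
Proof. intros H; destruct (Req_dec x y). subst; lra. left; apply exp_increasing; lra. Qed.

Lemma exp_INR_pow k u : exp (INR k * u) = exp u ^ k.
Proof.
  induction k. simpl. rewrite Rmult_0_l, exp_0. reflexivity.
  rewrite S_INR. simpl. rewrite <- IHk, <- exp_plus. f_equal; ring.
Qed.

Lemma exp_taylor2 a : Rabs (exp a - 1 - a) <= a^2 * exp (Rabs a).
Proof.
  pose proof (exp_ineq1_le a) as H1. pose proof (exp_ineq1_le (-a)) as H2.
  assert (HE : exp a * exp (-a) = 1) by (rewrite <- exp_plus; replace (a + -a) with 0 by ring; apply exp_0).
  pose proof (exp_pos a). pose proof (exp_pos (-a)).
  rewrite Rabs_pos_eq by lra.
  destruct (Rle_lt_dec 0 a).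
  - rewrite Rabs_pos_eq by lra.
    assert (exp a - 1 <= a * exp a) by nra.
    nra.
  - rewrite Rabs_left by lra.
    set (E := exp a) in *. set (E' := exp (-a)) in *. set (w := -a) in *.
    assert (E' - 1 <= w * E').
    { assert (0 <= (E - (1 - w)) * E') by (apply Rmult_le_pos; unfold w in *; lra). nra. }
    assert (Hw : 0 < w) by (unfold w; lra).
    assert (1 <= E') by lra.
    assert (1 - E' + w * E' <= w * (E' - 1)) by (unfold w in *; lra).
    assert (w * (E' - 1) <= w * (w * E')) by (apply Rmult_le_compat_l; lra).
    assert (w * (w * E') <= w * w * E' * E').
    { replace (w * (w * E')) with (w*w*E'*1) by ring. apply Rmult_le_compat_l. apply Rmult_le_pos; [nra|lra]. lra. }
    replace (a^2) with (w*w) by (unfold w; ring).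
    assert (Heq : E - 1 - a = E * (1 - E' + w * E')).
    { unfold w. replace (E * (1 - E' + - a * E')) with (E - E*E' - a * (E*E')) by ring. rewrite HE. ring. }
    rewrite Heq.
    apply Rle_trans with (E * (w*w*E'*E')). apply Rmult_le_compat_l; lra.
    replace (E * (w*w*E'*E')) with (w*w*E' * (E*E')) by ring. rewrite HE. lra.
Qed.

Lemma mono_int (f : R -> R) (C : R) :
  (forall u, 0 <= u -> 0 <= f u) -> (forall u, continuous f u) ->
  (forall b, 0 <= b -> RInt f 0 b <= C) ->
  exists l, is_RInt_gen f (at_point 0) (Rbar_locally p_infty) l /\
            (forall b, 0 <= b -> RInt f 0 b <= l).
Proof.
  intros Hpos Hc HC.
  assert (Hex : forall a b, ex_RInt f a b) by (intros; apply (@ex_RInt_continuous R_CompleteNormedModule); intros; apply Hc).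
  assert (Hmono : forall a b, 0 <= a -> a <= b -> RInt f 0 a <= RInt f 0 b).
  { intros a b Ha Hab. rewrite <- (RInt_Chasles f 0 a b) by auto.
    assert (0 <= RInt f a b) by (apply RInt_ge_0; auto; intros; apply Hpos; lra).
    unfold plus; simpl. lra. }
  set (E := fun v => exists b, 0 <= b /\ v = RInt f 0 b).
  assert (HB : bound E) by (exists C; intros v [b [Hb ->]]; auto).
  assert (HE : exists v, E v) by (exists (RInt f 0 0); exists 0; split; [lra|auto]).
  destruct (completeness E HB HE) as [l [Hub Hlub]].
  exists l. split.
  2:{ intros b Hb. apply Hub. exists b; auto. }
  intros P [eps HP].
  destruct (classic (exists b, 0 <= b /\ l - eps < RInt f 0 b)) as [[b0 [Hb0 Hlt]] | Hno].
  - apply Filter_prod with (fun a => a = 0) (fun b => b0 < b).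
    + reflexivity.
    + exists b0. auto.
    + intros a b Ha Hb. simpl. subst a. exists (RInt f 0 b). split.
      * apply (@RInt_correct R_CompleteNormedModule). auto.
      * apply HP. assert (RInt f 0 b0 <= RInt f 0 b) by (apply Hmono; lra).
        assert (RInt f 0 b <= l) by (apply Hub; exists b; split; [lra|auto]).
        unfold ball; simpl; unfold AbsRing_ball, abs, minus, plus, opp; simpl.
        apply Rabs_def1; destruct eps as [e He]; simpl in *; lra.
  - exfalso. assert (l <= l - eps).
    { apply Hlub. intros v [b [Hb ->]]. apply Rnot_lt_le. intro H. apply Hno. exists b; auto. }
    destruct eps as [e He]; simpl in *; lra.
Qed.

Definition fk (k : nat) (y u : R) : R := u ^ k * exp (y * u - u ^ 2 / 2).

Lemma fk_cont k y u : continuous (fk k y) u.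
Proof. apply (@ex_derive_continuous R_AbsRing R_NormedModule). unfold fk. auto_derive. auto. Qed.

Lemma fk_nonneg k y u : 0 <= u -> 0 <= fk k y u.
Proof. intros. unfold fk. apply Rmult_le_pos. apply pow_le; auto. left; apply exp_pos. Qed.

Lemma fk_bound k y u : 0 <= u -> fk k y u <= exp ((y + INR k + 1)^2/2) * exp (-u).
Proof.
  intros Hu. unfold fk.
  assert (Hu1 : u <= exp u) by (pose proof (exp_ineq1_le u); lra).
  assert (u ^ k <= exp u ^ k) by (apply pow_incr; auto).
  apply Rle_trans with (exp u ^ k * exp (y * u - u ^ 2 / 2)).
  apply Rmult_le_compat_r; [left; apply exp_pos| auto].
  rewrite <- exp_INR_pow, <- !exp_plus. apply exple.
  pose proof (pow2_ge_0 (u - (y + INR k + 1))). nra.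
Qed.

Lemma int_exp K b : RInt (fun u => K * exp (- u)) 0 b = K * (1 - exp (- b)).
Proof.
  apply is_RInt_unique.
  assert (H := @is_RInt_derive R_CompleteNormedModule (fun u => - K * exp (-u)) (fun u => K * exp (-u)) 0 b).
  replace (K * (1 - exp (- b))) with (minus (- K * exp (-b)) (- K * exp (- 0))).
  - apply H.
    + intros. auto_derive. auto. ring.
    + intros. apply (@ex_derive_continuous R_AbsRing R_NormedModule). auto_derive. auto.
  - unfold minus, plus, opp; simpl. rewrite Ropp_0, exp_0. ring.
Qed.

Lemma fk_ex k y : exists l, is_RInt_gen (fk k y) (at_point 0) (Rbar_locally p_infty) l /\
            (forall b, 0 <= b -> RInt (fk k y) 0 b <= l).
Proof.
  apply mono_int with (exp ((y + INR k + 1)^2/2)).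
  - apply fk_nonneg.
  - apply fk_cont.
  - intros b Hb. set (K := exp ((y + INR k + 1)^2/2)).
    apply Rle_trans with (RInt (fun u => K * exp (- u)) 0 b).
    + apply RInt_le; auto.
      * apply (@ex_RInt_continuous R_CompleteNormedModule). intros; apply fk_cont.
      * apply (@ex_RInt_continuous R_CompleteNormedModule). intros. apply (@ex_derive_continuous R_AbsRing R_NormedModule). auto_derive. auto.
      * intros. apply fk_bound. lra.
    + rewrite int_exp. pose proof (exp_pos (-b)). assert (0 < K) by apply exp_pos. nra.
Qed.

Definition I (k : nat) (y : R) : R := RInt_gen (fk k y) (at_point 0) (Rbar_locally p_infty).

Lemma I_spec k y : is_RInt_gen (fk k y) (at_point 0) (Rbar_locally p_infty) (I k y) /\
            (forall b, 0 <= b -> RInt (fk k y) 0 b <= I k y).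
Proof.
  destruct (fk_ex k y) as [l [H1 H2]].
  assert (I k y = l) by (apply is_RInt_gen_unique; auto).
  rewrite H. auto.
Qed.

Lemma I_pos k y : 0 < I k y.
Proof.
  destruct (I_spec k y) as [_ H].
  assert (Hex : forall a b, ex_RInt (fk k y) a b) by (intros; apply (@ex_RInt_continuous R_CompleteNormedModule); intros; apply fk_cont).
  set (c := exp (-2 * Rabs y - 2)).
  assert (Hc : 0 < c) by apply exp_pos.
  assert (c <= RInt (fk k y) 1 2).
  { apply Rle_trans with (RInt (fun _ => c) 1 2).
    - rewrite RInt_const. unfold scal; simpl; unfold mult; simpl. lra.
    - apply RInt_le; auto. lra. apply ex_RInt_const.
      intros u Hu. unfold fk. rewrite <- (Rmult_1_l c). apply Rmult_le_compat; try lra.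
      apply pow_R1_Rle; lra. apply exple.
      assert (-2 * Rabs y <= y * u).
      { destruct (Rle_lt_dec 0 y). rewrite Rabs_pos_eq by lra. nra. rewrite Rabs_left by lra. nra. }
      nra. }
  assert (0 <= RInt (fk k y) 0 1) by (apply RInt_ge_0; auto; [lra|intros; apply fk_nonneg; lra]).
  assert (H02 : RInt (fk k y) 0 2 <= I k y) by (apply H; lra).
  rewrite <- (RInt_Chasles (fk k y) 0 1 2) in H02 by auto. unfold plus in H02; simpl in H02. lra.
Qed.

Lemma pt_bound k y h x : Rabs h <= 1 -> 0 <= x ->
  Rabs (fk k (y + h) x - fk k y x - h * fk (S k) y x) <= h ^ 2 * fk (S (S k)) (Rabs y + 1) x.
Proof.
  intros Hh Hx. unfold fk.
  set (E0 := exp (y * x - x ^ 2 / 2)).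
  assert (HE : exp ((y + h) * x - x ^ 2 / 2) = E0 * exp (h * x)).
  { unfold E0. rewrite <- exp_plus. f_equal. ring. }
  rewrite HE.
  replace (x ^ k * (E0 * exp (h * x)) - x ^ k * E0 - h * (x ^ S k * E0))
    with ((x ^ k * E0) * (exp (h * x) - 1 - h * x)) by (simpl; ring).
  rewrite Rabs_mult. rewrite (Rabs_pos_eq (x^k * E0)).
  2:{ apply Rmult_le_pos. apply pow_le; auto. left; apply exp_pos. }
  assert (Hp : 0 <= x ^ k * E0) by (apply Rmult_le_pos; [apply pow_le; auto| left; apply exp_pos]).
  apply Rle_trans with (x ^ k * E0 * ((h * x)^2 * exp (Rabs (h * x)))).
  apply Rmult_le_compat_l; auto. apply exp_taylor2.
  replace (x ^ k * E0 * ((h * x) ^ 2 * exp (Rabs (h * x)))) with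
     (h ^ 2 * (x ^ S (S k) * (E0 * exp (Rabs (h * x))))) by (simpl; ring).
  apply Rmult_le_compat_l. apply pow2_ge_0.
  apply Rmult_le_compat_l. apply pow_le; auto.
  unfold E0; rewrite <- exp_plus. apply exple.
  rewrite Rabs_mult, (Rabs_pos_eq x) by auto.
  assert (y * x <= Rabs y * x) by (apply Rmult_le_compat_r; auto; apply Rle_abs).
  assert (Rabs h * x <= 1 * x) by (apply Rmult_le_compat_r; auto).
  lra.
Qed.

Lemma I_diff_bound k y h : Rabs h <= 1 ->
  Rabs (I k (y + h) - I k y - h * I (S k) y) <= h ^ 2 * I (S (S k)) (Rabs y + 1).
Proof.
  intros Hh.
  assert (Hd := is_RInt_gen_minus _ _ _ _
     (is_RInt_gen_minus _ _ _ _ (proj1 (I_spec k (y + h))) (proj1 (I_spec k y)))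
     (is_RInt_gen_scal _ h _ (proj1 (I_spec (S k) y)))).
  assert (Hg := is_RInt_gen_scal _ (h ^ 2) _ (proj1 (I_spec (S (S k)) (Rabs y + 1)))).
  assert (HN := fun H1 H2 => @RInt_gen_norm R_CompleteNormedModule _ _ _ _ _ _ _ _ H1 H2 Hd Hg).
  simpl in HN. unfold minus, plus, opp, scal, norm in HN; simpl in HN. unfold mult, abs in HN; simpl in HN.
  replace (I k (y + h) - I k y - h * I (S k) y) with (I k (y + h) + - I k y + - (h * I (S k) y)) by ring.
  apply HN.
  - apply Filter_prod with (fun a => a = 0) (fun b => 0 < b).
    reflexivity. exists 0; auto. intros a b -> Hb. simpl. lra.
  - apply Filter_prod with (fun a => a = 0) (fun b => 0 < b).
    reflexivity. exists 0; auto. intros a b -> Hb u Hu. simpl in Hu.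
    replace (fk k (y + h) u + - fk k y u + - (h * fk (S k) y u)) with
      (fk k (y + h) u - fk k y u - h * fk (S k) y u) by ring.
    apply pt_bound; auto; lra.
Qed.

Lemma I_deriv k y : is_derive (I k) y (I (S k) y).
Proof.
  apply is_derive_Reals. intros eps Heps.
  set (K := I (S (S k)) (Rabs y + 1)).
  assert (HK : 0 < K) by apply I_pos.
  assert (Hd : 0 < Rmin 1 (eps / (K + 1))).
  { apply Rmin_pos. lra. apply Rdiv_lt_0_compat; lra. }
  exists (mkposreal _ Hd). intros h Hh0 Hh. simpl in Hh.
  assert (Hh1 : Rabs h <= 1) by (pose proof (Rmin_l 1 (eps / (K + 1))); lra).
  assert (Hh2 : Rabs h < eps / (K + 1)) by (pose proof (Rmin_r 1 (eps / (K + 1))); lra).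
  pose proof (I_diff_bound k y h Hh1) as HB. fold K in HB.
  assert (Hah : 0 < Rabs h) by (apply Rabs_pos_lt; auto).
  replace ((I k (y + h) - I k y) / h - I (S k) y) with ((I k (y + h) - I k y - h * I (S k) y) / h)
    by (field; auto).
  rewrite Rabs_div by auto.
  apply (Rmult_lt_reg_r (Rabs h)); auto. unfold Rdiv. rewrite Rmult_assoc, Rinv_l by lra.
  rewrite Rmult_1_r.
  replace (h ^ 2) with (Rabs h * Rabs h) in HB by (rewrite <- Rabs_mult; rewrite Rabs_pos_eq; [ring| nra]).
  assert (Rabs h * (K + 1) < eps).
  { apply Rlt_le_trans with (eps / (K + 1) * (K + 1)). apply Rmult_lt_compat_r; lra.
    right; field; lra. }
  nra.
Qed.


Lemma F_I n z : F (2 * n + 1) z = I (2 * n) z.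
Proof. unfold F, I, fk. replace (2 * n + 1 - 1)%nat with (2 * n)%nat by lia. reflexivity. Qed.

Lemma Key n B (HB : 0 < B) (Huniq : forall c, 0 < c -> Bfun n c = 0 -> c = B) z :
  0 <= z < B -> z ^ (2 * n + 1) <= B ^ (2 * n + 1) * F (2 * n + 1) z / F (2 * n + 1) B.
Proof.
  intros [Hz0 HzB]. rewrite !F_I.
  set (FF := I (2 * n)).
  assert (HFF : forall w, 0 < FF w) by (intros; apply I_pos).
  set (m := (2 * n + 1)%nat).
  assert (Hm : m = S (2 * n)) by (unfold m; lia).
  set (h := fun w => w ^ m / FF w).
  set (D := fun c => (INR m * 1 * c ^ pred m * FF c - c ^ m * I (S (2 * n)) c) / FF c ^ 2).
  assert (Hder : forall c, is_derive h c (D c)).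
  { intros c. unfold h, D. apply is_derive_div.
    - apply is_derive_pow. apply (@is_derive_id R_AbsRing).
    - apply I_deriv.
    - apply Rgt_not_eq, HFF. }
  assert (Hpos : 0 < B ^ m) by (apply pow_lt; auto).
  destruct (Req_dec z 0) as [Hz | Hz].
  { subst z. rewrite pow_i by lia.
    apply Rlt_le. apply Rdiv_lt_0_compat. apply Rmult_lt_0_compat; auto. apply HFF. }
  assert (Hzp : 0 < z) by lra.
  apply Rnot_lt_le. intro Hc.
  assert (HhzB : h B < h z).
  { unfold h. pose proof (HFF z). pose proof (HFF B).
    cbv beta.
    replace (B ^ m / FF B) with (B ^ m * FF z / FF B * / FF z) by (field; split; lra).
    apply Rmult_lt_compat_r. apply Rinv_0_lt_compat; lra. exact Hc. }
  assert (Hhz0 : 0 < h z) by (unfold h; apply Rdiv_lt_0_compat; [apply pow_lt; auto| apply HFF]).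
  assert (Hh0 : h 0 = 0) by (unfold h; rewrite Hm; simpl; unfold Rdiv; ring).
  destruct (continuity_ab_maj h 0 B) as [Mx [HMx [HM0 HMB]]]. lra.
  { intros c _. apply derivable_continuous_pt. exists (D c). apply is_derive_Reals, Hder. }
  assert (HMx_z : h z <= h Mx) by (apply HMx; lra).
  assert (HMxB : Mx <> B) by (intro E; subst Mx; lra).
  assert (HMx0 : Mx <> 0) by (intro E; rewrite E in HMx_z; lra).
  set (pr := exist (fun l => derivable_pt_lim h Mx l) (D Mx) (proj1 (is_derive_Reals _ _ _) (Hder Mx))).
  assert (HD : derive_pt h Mx pr = 0).
  { apply deriv_maximum with 0 B; try lra. intros x Hx1 Hx2. apply HMx. lra. }
  simpl in HD. unfold D in HD.
  apply HMxB. apply Huniq. lra.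
  unfold Bfun. fold m.
  rewrite (Derive_ext (F m) (I (2 * n))) by (intro; apply F_I).
  rewrite (is_derive_unique _ _ _ (I_deriv (2 * n) Mx)).
  unfold m; rewrite (F_I n Mx). fold m. fold FF.
  pose proof (HFF Mx) as HF.
  assert (HP : 0 < Mx ^ (2 * n)) by (apply pow_lt; lra).
  rewrite Hm in HD. change (pred (S (2 * n))) with (2 * n)%nat in HD. change (Mx ^ S (2 * n)) with (Mx * Mx ^ (2 * n)) in HD.
  assert (HN : (INR m * FF Mx - Mx * I (S (2 * n)) Mx) * Mx ^ (2 * n) = 0).
  { rewrite Hm.
    apply (Rmult_eq_reg_r (/ FF Mx ^ 2)). 2:{ apply Rinv_neq_0_compat. apply pow_nonzero; lra. }
    rewrite Rmult_0_l. rewrite <- HD. unfold Rdiv. ring. }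
  apply Rmult_integral in HN. destruct HN as [HN | HN]; [|lra].
  field_simplify; [|lra]. unfold Rdiv. rewrite HN. ring.
Qed.

Lemma pow_odd_opp n x : (- x) ^ (2 * n + 1) = - x ^ (2 * n + 1).
Proof.
  replace (- x) with ((-1) * x) by ring. rewrite Rpow_mult_distr.
  replace (2 * n + 1)%nat with (S (2 * n)) by lia. rewrite pow_1_odd. ring.
Qed.

Lemma Rpower_half n t : t < 1 -> Rpower (1 - t) (INR n + 1 / 2) = sqrt (1 - t) ^ (2 * n + 1).
Proof.
  intros Ht. rewrite Rpower_plus, Rpower_pow by lra.
  replace (1 / 2) with (/ 2) by field. rewrite Rpower_sqrt by lra.
  replace (2 * n + 1)%nat with (S (2 * n)) by lia. change (sqrt (1 - t) ^ S (2 * n)) with (sqrt (1 - t) * sqrt (1 - t) ^ (2 * n)).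
  rewrite pow_sqr, sqrt_sqrt by lra. ring.
Qed.

Theorem lemma4p4 (n : nat) (Bs : R)
  (HBpos : 0 < Bs)
  (HBzero : Bfun n Bs = 0)
  (HBuniq : forall B, 0 < B -> Bfun n B = 0 -> B = Bs)
  (t x : R) (Ht0 : 0 <= t) (Ht1 : t < 1) :
  Jstar n Bs t x >= g n Bs t x.
Proof.
  unfold Jstar.
  destruct (Rlt_dec (Rabs x) (Bs * sqrt (1 - t))) as [Hx | Hx]; [|lra].
  set (s := sqrt (1 - t)) in *.
  assert (Hs : 0 < s) by (apply sqrt_lt_R0; lra).
  set (m := (2 * n + 1)%nat).
  set (FF := F m).
  assert (HFF : forall w, 0 < FF w) by (intro; unfold FF, m; rewrite F_I; apply I_pos).
  assert (Hj : j n Bs Bs = Bs ^ m / FF Bs).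
  { unfold j, G. fold m FF. pose proof (HFF Bs). pose proof (HFF (- Bs)). field. split; lra. }
  rewrite Hj. unfold G. fold m FF.
  rewrite Rpower_half by lra. fold s.
  assert (HP : 0 < s ^ m) by (apply pow_lt; auto).
  assert (Hxs : x = s * (x / s)) by (field; lra).
  unfold g, U. fold s m FF. rewrite Rpower_half by lra. fold s.
  destruct (Rle_dec x 0) as [Hx0 | Hx0].
  - destruct (Rlt_dec x (Bs * s)) as [_ | H]. 2:{ exfalso; apply H. nra. }
    set (z := - (x / s)).
    assert (Hz : 0 <= z < Bs).
    { unfold z. rewrite Rabs_left1 in Hx by lra. split.
      assert (x / s <= 0). { unfold Rdiv. apply Rmult_le_0_r; auto. left; apply Rinv_0_lt_compat; auto. } lra.
      apply (Rmult_lt_reg_l s); auto. replace (s * - (x / s)) with (- x) by (field; lra). lra. }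
    pose proof (Key n Bs HBpos HBuniq z Hz) as HK. fold m FF in HK.
    assert (Hxm : x ^ m = - (s ^ m * z ^ m)).
    { rewrite <- Rpow_mult_distr. unfold z. replace (s * - (x / s)) with (- x) by (field; lra).
      unfold m. rewrite pow_odd_opp. ring. }
    rewrite Hxm. fold z.
    assert (0 <= s ^ m * (Bs ^ m * FF z / FF Bs - z ^ m)) by (apply Rmult_le_pos; lra).
    apply Rle_ge. fold m. pose proof (HFF Bs).
    apply Rminus_le. match goal with |- ?A - ?B <= 0 => replace (A - B) with (- (s ^ m * (Bs ^ m * FF z / FF Bs - z ^ m))) by (field; lra) end. lra.
  - destruct (Rlt_dec (- x) (Bs * s)) as [_ | H]. 2:{ exfalso; apply H. nra. }
    set (z := x / s).
    assert (Hz : 0 <= z < Bs).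
    { unfold z. rewrite Rabs_pos_eq in Hx by lra. split.
      left. apply Rdiv_lt_0_compat; lra.
      apply (Rmult_lt_reg_l s); auto. replace (s * (x / s)) with x by (field; lra). lra. }
    pose proof (Key n Bs HBpos HBuniq z Hz) as HK. fold m FF in HK.
    assert (Hxm : x ^ m = s ^ m * z ^ m).
    { rewrite <- Rpow_mult_distr. unfold z. f_equal. field. lra. }
    rewrite Hxm. replace (- x / s) with (- z) by (unfold z; field; lra). fold z.
    assert (0 <= s ^ m * (Bs ^ m * FF z / FF Bs - z ^ m)) by (apply Rmult_le_pos; lra).
    apply Rle_ge. fold m. pose proof (HFF Bs).
    apply Rminus_le. match goal with |- ?A - ?B <= 0 => replace (A - B) with (- (s ^ m * (Bs ^ m * FF z / FF Bs - z ^ m))) by (field; lra) end. lra.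
Qed.
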